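(* Let $\mathcal{K}\subseteq\wp(\mathcal{G})$ be coherent. For finitely many $A_1,\ldots,A_n\in\mathcal{K}$ ($n\ge1$) let $\mathbb{D}_{\{A_1,\ldots,A_n\}}$ be the set of all coherent $D\subseteq\mathcal{G}$ for which there is $\langle g_1,\ldots,g_n\rangle\in A_1\times\cdots\times A_n$ with $0\notin\mathcal{E}(\{g_1,\ldots,g_n\})$ and $D\supseteq\mathcal{E}(\{g_1,\ldots,g_n\})$, and let $\mathfrak{D}_{\mathcal{K}}:=\{\mathbb{D}_{\{A_1,\ldots,A_n\}}: n\ge1,\ A_1,\ldots,A_n\in\mathcal{K}\}$. Then: $\mathfrak{D}_{\mathcal{K}}$ is non-empty; each of its members is a non-empty set of coherent sets of desirable gambles; $\mathbb{D}_{\{A^1_1,\ldots,A^1_{n_1},A^2_1,\ldots,A^2_{n_2}\}}\subseteq\mathbb{D}_{\{A^1_1,\ldots,A^1_{n_1}\}}\cap\mathbb{D}_{\{A^2_1,\ldots,A^2_{n_2}\}}$ (so $\mathfrak{D}_{\mathcal{K}}$ is downwards closed); and $\mathcal{K}=\mathcal{K}_{\mathfrak{D}_{\mathcal{K}}}$.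
   Context: $\Omega$ is a non-empty set and $\mathcal{G}$ is the set of bounded functions $\Omega\to\mathbb{R}$. $f\geq g$ means pointwise $\geq$; $f\gneq g$ means $f\geq g$ and $f\neq g$; $\mathcal{G}_{\gneq 0}=\{f: f\gneq 0\}$. $\mathrm{posi}(B)=\{\sum_{i=1}^m\lambda_i h_i: m\geq1,\lambda_i>0,h_i\in B\}$, and $\mathcal{E}(E):=\mathrm{posi}(E\cup\mathcal{G}_{\gneq 0})$. A set $D\subseteq\mathcal{G}$ is coherent if $0\notin D$; $\mathcal{G}_{\gneq0}\subseteq D$; $\lambda g\in D$ whenever $g\in D,\lambda>0$; and $f+g\in D$ whenever $f,g\in D$. A set $\mathcal{K}\subseteq\wp(\mathcal{G})$ is coherent if: (K$_\emptyset$) $\emptyset\notin\mathcal{K}$; (K$_0$) if $A\in\mathcal{K}$ then $A\setminus\{0\}\in\mathcal{K}$; (K$_{\gneq0}$) if $g\in\mathcal{G}_{\gneq0}$ then $\{g\}\in\mathcal{K}$; (K$_\supseteq$) if $A\in\mathcal{K}$ and $B\supseteq A$ then $B\in\mathcal{K}$; (K$_{\mathrm{Dom}}$) if $A\in\mathcal{K}$ and for each $g\in A$, $f_g$ is a gamble with $f_g\geq g$, then $\{f_g: g\in A\}\in\mathcal{K}$; (K$_{\mathrm{Add}}$) if $A_1,\ldots,A_n\in\mathcal{K}$ (finitely many) and for each $\langle g_1,\ldots,g_n\rangle\in A_1\times\cdots\times A_n$, $f_{\langle g_1,\ldots,g_n\rangle}$ is some member of $\mathrm{posi}(\{g_1,\ldots,g_n\})$,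 then $\{f_{\langle g_1,\ldots,g_n\rangle}\}\in\mathcal{K}$ (the set of all these). A set $\mathfrak{D}$ of sets of coherent $D$'s is downwards closed if for all $\mathbb{D}_1,\mathbb{D}_2\in\mathfrak{D}$ there is $\mathbb{D}\in\mathfrak{D}$ with $\mathbb{D}\subseteq\mathbb{D}_1\cap\mathbb{D}_2$. For such $\mathfrak{D}$, $\mathcal{K}_{\mathfrak{D}}:=\{B\subseteq\mathcal{G}:\exists\mathbb{D}\in\mathfrak{D}\ \forall D\in\mathbb{D},\ B\cap D\neq\emptyset\}$. *)

(* Defs.v *)
From Stdlib Require Import Reals List.
Import ListNotations.
Open Scope R_scope.
Set Implicit Arguments.

Section Gambles.
Variable Omega : Type.

Record gamble := Gamble {
  gf :> Omega -> R;
  gbounded : exists M : R, forall w, Rabs (gf w) <= M }.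

Definition gset := gamble -> Prop.

Definition gge (f g : gamble) : Prop := forall w, gf g w <= gf f w.

(* the zero gamble (identified extensionally) *)
Definition is_zero (f : gamble) : Prop := forall w, gf f w = 0.

Definition gpos (f : gamble) : Prop :=
  (forall w, 0 <= gf f w) /\ exists w, gf f w <> 0.

Definition lincomb (l : list (R * gamble)) (w : Omega) : R :=
  fold_right (fun p acc => fst p * gf (snd p) w + acc) 0 l.

Definition posi (B : gset) : gset := fun h =>
  exists l : list (R * gamble),
    l <> [] /\ Forall (fun p => 0 < fst p /\ B (snd p)) l /\
    forall w, gf h w = lincomb l w.

Definition Ecl (E : gset) : gset := posi (fun h => E h \/ gpos h).

Definition has_zero (D : gset) : Prop := exists h, D h /\ is_zero h.

Definition coherentD (D : gset) : Prop :=
  ~ has_zero D /\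
  (forall g, gpos g -> D g) /\
  (forall g lam h, D g -> 0 < lam -> (forall w, gf h w = lam * gf g w) -> D h) /\
  (forall f g h, D f -> D g -> (forall w, gf h w = gf f w + gf g w) -> D h).

Definition in_prod (As : list gset) (gs : list gamble) : Prop :=
  Forall2 (fun (A : gset) g => A g) As gs.

Definition lset (gs : list gamble) : gset := fun h => In h gs.

Definition coherentK (K : gset -> Prop) : Prop :=
  (* K_empty *)
  ~ K (fun _ => False) /\
  (* K_0 *)
  (forall A, K A -> K (fun g => A g /\ ~ is_zero g)) /\
  (* K_{⪈0} *)
  (forall g, gpos g -> K (fun h => h = g)) /\
  (* K_⊇ *)
  (forall A B : gset, K A -> (forall g, A g -> B g) -> K B) /\
  (* K_Dom *)
  (forall (A : gset) (F : gamble -> gamble), K A ->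
     (forall g, A g -> gge (F g) g) ->
     K (fun h => exists g, A g /\ h = F g)) /\
  (* K_Add *)
  (forall (As : list gset) (F : list gamble -> gamble),
     As <> [] -> Forall K As ->
     (forall gs, in_prod As gs -> posi (lset gs) (F gs)) ->
     K (fun h => exists gs, in_prod As gs /\ h = F gs)).

Definition DD_of (As : list gset) : gset -> Prop := fun D =>
  coherentD D /\
  exists gs, in_prod As gs /\ ~ has_zero (Ecl (lset gs)) /\
             (forall h, Ecl (lset gs) h -> D h).

Definition frakD_K (K : gset -> Prop) : (gset -> Prop) -> Prop := fun DD =>
  exists As : list gset, As <> [] /\ Forall K As /\ DD = DD_of As.

Definition downwards_closed (frakD : (gset -> Prop) -> Prop) : Prop :=
  forall DD1 DD2, frakD DD1 -> frakD DD2 ->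
    exists DD, frakD DD /\ forall D, DD D -> DD1 D /\ DD2 D.

Definition K_of (frakD : (gset -> Prop) -> Prop) : gset -> Prop := fun B =>
  exists DD, frakD DD /\ forall D, DD D -> exists g, B g /\ D g.

End Gambles.

(* Main.v *)
Require Import Defs.
From Stdlib Require Import Reals List Lra Classical ClassicalEpsilon.
Import ListNotations.
Open Scope R_scope.

Section Aux.
Variable Omega : Type.

Lemma lincomb_bnd (l : list (R * gamble Omega)) :
  exists M, forall w, Rabs (lincomb l w) <= M.
Proof.
  induction l as [|[a g] l [M HM]]; simpl.
  - exists 0; intros; rewrite Rabs_R0; lra.
  - destruct (gbounded g) as [Mg HMg]. exists (Rabs a * Mg + M). intro w.
    eapply Rle_trans; [apply Rabs_triang|]. rewrite Rabs_mult.
    apply Rplus_le_compat; [apply Rmult_le_compat_l; [apply Rabs_pos|apply HMg]|apply HM].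
Qed.

Definition mkg (l : list (R * gamble Omega)) : gamble Omega :=
  Gamble (lincomb l) (lincomb_bnd l).

Lemma cst_bnd (c : R) : exists M, forall w : Omega, Rabs ((fun _ => c) w) <= M.
Proof. exists (Rabs c); intros; lra. Qed.

Definition zg : gamble Omega := Gamble (fun _ => 0) (cst_bnd 0).
Definition og : gamble Omega := Gamble (fun _ => 1) (cst_bnd 1).

Lemma split_lem (gs : list (gamble Omega)) l :
  Forall (fun p => 0 < fst p /\ (lset gs (snd p) \/ gpos (snd p))) l ->
  (exists l1, l1 <> [] /\ Forall (fun p => 0 < fst p /\ lset gs (snd p)) l1 /\
     forall w, lincomb l1 w <= lincomb l w)
  \/ ((forall w, 0 <= lincomb l w) /\ (l <> [] -> exists w, 0 < lincomb l w)).
Proof.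
  induction l as [|[a h] l IH]; intro HF.
  - right. simpl. split; [intros; lra|intro C; congruence].
  - inversion HF as [|? ? [Ha Hh] HF']; subst. simpl in Ha, Hh.
    specialize (IH HF'). destruct Hh as [Hin|Hpos].
    + destruct IH as [[l1 [Hne [Hl1 Hle]]]|[Hnn _]].
      * left. exists ((a,h)::l1). split; [discriminate|]. split; [constructor; auto|].
        intro w; simpl. specialize (Hle w). lra.
      * left. exists [(a,h)]. split; [discriminate|]. split; [constructor; auto|].
        intro w; simpl. specialize (Hnn w). lra.
    + destruct Hpos as [Hp [w0 Hw0]].
      destruct IH as [[l1 [Hne [Hl1 Hle]]]|[Hnn _]].
      * left. exists l1. split; auto. split; auto. intro w; simpl.
        specialize (Hle w). assert (0 <= a * h w) by (apply Rmult_le_pos; [lra|apply Hp]). lra.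
      * right. split.
        -- intro w; simpl. specialize (Hnn w).
           assert (0 <= a * h w) by (apply Rmult_le_pos; [lra|apply Hp]). lra.
        -- intros _. exists w0. simpl. specialize (Hnn w0).
           destruct (Rle_lt_or_eq_dec 0 (h w0) (Hp w0)) as [Hlt|Heq];
             [|exfalso; apply Hw0; auto].
           assert (0 < a * h w0) by (apply Rmult_lt_0_compat; lra). lra.
Qed.

Lemma elem_case (gs : list (gamble Omega)) b : Ecl (lset gs) b ->
  (exists f, posi (lset gs) f /\ forall w, f w <= b w) \/ gpos b.
Proof.
  intros [l [Hne [HF Hb]]].
  destruct (split_lem gs l HF) as [[l1 [H1 [H2 H3]]]|[H1 H2]].
  - left. exists (mkg l1). split.
    + exists l1. split; auto.
    + intro w; simpl; rewrite Hb; apply H3.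
  - right. split.
    + intro w; rewrite Hb; auto.
    + destruct (H2 Hne) as [w Hw]; exists w; rewrite Hb; intro; lra.
Qed.

Lemma lincomb_scale lam (l : list (R * gamble Omega)) w :
  lincomb (map (fun p => (lam * fst p, snd p)) l) w = lam * lincomb l w.
Proof. induction l; simpl; [ring|]. rewrite IHl; ring. Qed.

Lemma lincomb_app (l1 l2 : list (R * gamble Omega)) w :
  lincomb (l1 ++ l2) w = lincomb l1 w + lincomb l2 w.
Proof. induction l1; simpl; [ring|]. rewrite IHl1; ring. Qed.

Lemma Ecl_coh (E : gset Omega) : ~ has_zero (Ecl E) -> coherentD (Ecl E).
Proof.
  intro Hz. split; [auto|]. split; [|split].
  - intros g Hg. exists [(1, g)]. split; [discriminate|]. split.
    + constructor; [split; simpl; [lra|right; auto]|constructor].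
    + intro w; simpl; ring.
  - intros g lam h [l [Hne [HF Hg]]] Hl Hh.
    exists (map (fun p => (lam * fst p, snd p)) l). split.
    + destruct l; simpl; [congruence|discriminate].
    + split.
      * apply Forall_map. eapply Forall_impl; [|exact HF].
        intros [a x] [Ha Hx]; simpl in *. split; auto. apply Rmult_lt_0_compat; auto.
      * intro w. rewrite lincomb_scale, Hh, Hg. reflexivity.
  - intros f g h [l1 [Hne1 [HF1 Hf]]] [l2 [Hne2 [HF2 Hg]]] Hh.
    exists (l1 ++ l2). split.
    + destruct l1; simpl; [congruence|discriminate].
    + split; [apply Forall_app; auto|].
      intro w. rewrite lincomb_app, Hh, Hf, Hg. reflexivity.
Qed.

Lemma Ecl_mono (E1 E2 : gset Omega) : (forall h, E1 h -> E2 h) ->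
  forall h, Ecl E1 h -> Ecl E2 h.
Proof.
  intros HE h [l [Hne [HF Hh]]]. exists l. split; auto. split; auto.
  eapply Forall_impl; [|exact HF]. intros p [Hp [Hq|Hq]]; split; auto.
Qed.

Lemma exists_nonzero (K : gset Omega -> Prop) (HK : coherentK K) As :
  As <> [] -> Forall K As ->
  exists gs, Defs.in_prod As gs /\ ~ has_zero (Ecl (lset gs)).
Proof.
  destruct HK as [Hemp [HK0 [Hpos [Hsup [Hdom Hadd]]]]].
  intros Hne HAs. apply NNPP; intro Hn.
  assert (Hc : forall gs, exists f : gamble Omega, Defs.in_prod As gs ->
             posi (lset gs) f /\ forall w, f w <= 0).
  { intro gs. destruct (classic (Defs.in_prod As gs)) as [Hi|Hi].
    - assert (Hz : has_zero (Ecl (lset gs))) by (apply NNPP; intro; apply Hn; eauto).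
      destruct Hz as [h [Hh Hz]].
      destruct (elem_case gs h Hh) as [[f [Hf Hle]]|[_ [w Hw]]].
      + exists f; intros _; split; auto. intro w; specialize (Hle w); rewrite Hz in Hle; auto.
      + exfalso; apply Hw; apply Hz.
    - exists zg; intro; contradiction. }
  set (F := fun gs => proj1_sig (constructive_indefinite_description _ (Hc gs))).
  assert (HF : forall gs, Defs.in_prod As gs -> posi (lset gs) (F gs) /\ forall w, F gs w <= 0)
    by (intro gs; exact (proj2_sig (constructive_indefinite_description _ (Hc gs)))).
  pose proof (Hadd As F Hne HAs (fun gs Hg => proj1 (HF gs Hg))) as K1.
  pose proof (Hdom _ (fun _ => zg) K1) as K2.
  assert (K2' : K (fun h => exists g, (exists gs, Defs.in_prod As gs /\ g = F gs) /\ h = zg)).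
  { apply K2. intros g [gs [Hg ->]] w; simpl. apply HF; auto. }
  pose proof (HK0 _ K2') as K3. apply Hemp. apply (Hsup _ _ K3).
  intros g [[g' [_ ->]] Hnz]. apply Hnz; intro; reflexivity.
Qed.

End Aux.

Theorem mainTheorem9 (Omega : Type) (w0 : Omega)
  (K : gset Omega -> Prop) (HK : coherentK K) :
  (exists DD, frakD_K K DD) /\
  (forall DD, frakD_K K DD ->
     (exists D, DD D) /\ (forall D, DD D -> coherentD D)) /\
  (forall As1 As2 : list (gset Omega),
     As1 <> [] -> Forall K As1 -> As2 <> [] -> Forall K As2 ->
     forall D, DD_of (As1 ++ As2) D -> DD_of As1 D /\ DD_of As2 D) /\
  downwards_closed (frakD_K K) /\
  (forall B : gset Omega, K B <-> K_of (frakD_K K) B).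
Proof.
  pose proof HK as HK'.
  destruct HK' as [Hemp [HK0 [Hpos [Hsup [Hdom Hadd]]]]].
  assert (Hog : gpos (og Omega)).
  { split; [intros; simpl; lra|exists w0; simpl; lra]. }
  split; [|split; [|split; [|split]]].
  - exists (DD_of [fun h => h = og Omega]). exists [fun h => h = og Omega].
    split; [discriminate|]. split; [constructor; [apply Hpos; auto|constructor]|reflexivity].
  - intros DD [As [Hne [HAs ->]]]. split.
    + destruct (exists_nonzero _ K HK As Hne HAs) as [gs [Hg Hz]].
      exists (Ecl (lset gs)). split; [apply Ecl_coh; auto|exists gs; auto].
    + intros D [HD _]; auto.
  - intros As1 As2 _ _ _ _ D [HD [gs [Hg [Hz Hsub]]]].
    destruct (Forall2_app_inv_l _ _ Hg) as [gs1 [gs2 [Hg1 [Hg2 ->]]]].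
    split; split; auto.
    + exists gs1. split; auto. split.
      * intros [h [Hh Hh0]]. apply Hz. exists h. split; auto.
        eapply Ecl_mono; [|exact Hh]. intros x Hx. apply in_or_app; auto.
      * intros h Hh; apply Hsub. eapply Ecl_mono; [|exact Hh]. intros x Hx. apply in_or_app; auto.
    + exists gs2. split; auto. split.
      * intros [h [Hh Hh0]]. apply Hz. exists h. split; auto.
        eapply Ecl_mono; [|exact Hh]. intros x Hx. apply in_or_app; auto.
      * intros h Hh; apply Hsub. eapply Ecl_mono; [|exact Hh]. intros x Hx. apply in_or_app; auto.
  - intros DD1 DD2 [As1 [Hne1 [HAs1 ->]]] [As2 [Hne2 [HAs2 ->]]].
    exists (DD_of (As1 ++ As2)). split.
    + exists (As1 ++ As2). split; [destruct As1; simpl; [congruence|discriminate]|].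
      split; [apply Forall_app; auto|reflexivity].
    + intros D [HD [gs [Hg [Hz Hsub]]]].
      destruct (Forall2_app_inv_l _ _ Hg) as [gs1 [gs2 [Hg1 [Hg2 ->]]]].
      split; split; auto.
      * exists gs1. split; auto. split.
        -- intros [h [Hh Hh0]]. apply Hz. exists h. split; auto.
           eapply Ecl_mono; [|exact Hh]. intros x Hx. apply in_or_app; auto.
        -- intros h Hh; apply Hsub. eapply Ecl_mono; [|exact Hh]. intros x Hx. apply in_or_app; auto.
      * exists gs2. split; auto. split.
        -- intros [h [Hh Hh0]]. apply Hz. exists h. split; auto.
           eapply Ecl_mono; [|exact Hh]. intros x Hx. apply in_or_app; auto.
        -- intros h Hh; apply Hsub. eapply Ecl_mono; [|exact Hh]. intros x Hx. apply in_or_app; auto.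
  - intro B. split.
    + intro HB. exists (DD_of [B]). split.
      * exists [B]. split; [discriminate|]. split; [constructor; auto|reflexivity].
      * intros D [HD [gs [Hg [Hz Hsub]]]].
        inversion Hg as [|A g As' gs' HBg Hnil]; subst.
        inversion Hnil; subst.
        exists g. split; auto. apply Hsub. exists [(1, g)]. split; [discriminate|]. split.
        -- constructor; [split; simpl; [lra|left; simpl; auto]|constructor].
        -- intro w; simpl; ring.
    + intros [DD [[As [Hne [HAs ->]]] HB]].
      destruct (classic (exists b, B b /\ gpos b)) as [[b [Hb Hbp]]|Hnob].
      * apply (Hsup _ _ (Hpos b Hbp)). intros g ->; auto.
      * assert (Hc : forall gs, exists p : gamble Omega * gamble Omega, Defs.in_prod As gs ->
                  posi (lset gs) (fst p) /\ (forall w, fst p w <= snd p w) /\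
                  (B (snd p) \/ is_zero (snd p))).
        { intro gs. destruct (classic (Defs.in_prod As gs)) as [Hi|Hi].
          - destruct (classic (has_zero (Ecl (lset gs)))) as [Hz|Hz].
            + destruct Hz as [h [Hh Hz]].
              destruct (elem_case _ gs h Hh) as [[f [Hf Hle]]|[_ [w Hw]]].
              * exists (f, zg Omega); intros _; simpl. split; auto. split.
                -- intro w; specialize (Hle w); rewrite Hz in Hle; auto.
                -- right; intro; reflexivity.
              * exfalso; apply Hw; apply Hz.
            + assert (HDD : DD_of As (Ecl (lset gs))).
              { split; [apply Ecl_coh; auto|exists gs; auto]. }
              destruct (HB _ HDD) as [b [Hb Hbe]].
              destruct (elem_case _ gs b Hbe) as [[f [Hf Hle]]|Hp].
              * exists (f, b); intros _; simpl; auto.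
              * exfalso; apply Hnob; eauto.
          - exists (zg Omega, zg Omega); intro; contradiction. }
        set (P := fun gs => proj1_sig (constructive_indefinite_description _ (Hc gs))).
        assert (HP : forall gs, Defs.in_prod As gs -> posi (lset gs) (fst (P gs)) /\
                  (forall w, fst (P gs) w <= snd (P gs) w) /\
                  (B (snd (P gs)) \/ is_zero (snd (P gs))))
          by (intro gs; exact (proj2_sig (constructive_indefinite_description _ (Hc gs)))).
        set (F := fun gs => fst (P gs)).
        pose proof (Hadd As F Hne HAs (fun gs Hg => proj1 (HP gs Hg))) as K1.
        assert (Hc2 : forall h, exists t : gamble Omega,
                   (exists gs, Defs.in_prod As gs /\ h = F gs) -> gge t h /\ (B t \/ is_zero t)).
        { intro h. destruct (classic (exists gs, Defs.in_prod As gs /\ h = F gs)) as [[gs [Hg ->]]|Hn].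
          - exists (snd (P gs)). intros _. destruct (HP gs Hg) as [_ [H1 H2]].
            split; auto.
          - exists (zg Omega); intro; contradiction. }
        set (G := fun h => proj1_sig (constructive_indefinite_description _ (Hc2 h))).
        assert (HG : forall h, (exists gs, Defs.in_prod As gs /\ h = F gs) ->
                   gge (G h) h /\ (B (G h) \/ is_zero (G h)))
          by (intro h; exact (proj2_sig (constructive_indefinite_description _ (Hc2 h)))).
        pose proof (Hdom _ G K1 (fun g Hg => proj1 (HG g Hg))) as K2.
        pose proof (HK0 _ K2) as K3. apply (Hsup _ _ K3).
        intros g [[h [Hh ->]] Hnz]. destruct (proj2 (HG h Hh)) as [?|?]; auto; contradiction.
Qed.
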